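(* Let $(\mathbf X,\mathbf Y)$ be a general correlated source which is uniformly integrable and satisfies the conditional strong converse property $\underline H(\mathbf X|\mathbf Y)=\overline H(\mathbf X|\mathbf Y)$. Then the limit $H(\mathbf X|\mathbf Y)=\lim_{n\to\infty}\frac1nH(X^n|Y^n)$ exists, and for any $\varepsilon\in(0,1)$, \[\lim_{n\to\infty}\frac1n\overline H_s^\varepsilon(X^n|Y^n)=H(\mathbf X|\mathbf Y).\]
   Context: A general correlated source $(\mathbf X,\mathbf Y)=\{(X^n,Y^n)\}_{n\ge1}$ is an arbitrary sequence of pairs of random variables on $\mathcal X^n\times\mathcal Y^n$, $\mathcal X,\mathcal Y$ finite or countably infinite (no structural assumptions; marginal probabilities positive). Logs base 2. Uniformly integrable: $Z_n=\frac1n\log\frac1{P_{X^n|Y^n}(X^n|Y^n)}$ satisfies $\lim_{u\to\infty}\sup_n\sum_{z:|z|\ge u}P_{Z_n}(z)|z|=0$. $\overline H(\mathbf X|\mathbf Y)=\inf\{\alpha:\lim_n\Pr\{Z_n>\alpha\}=0\}$, $\underline H(\mathbf X|\mathbf Y)=\sup\{\beta:\lim_n\Pr\{Z_n<\beta\}=0\}$. For $x^n$ and $\varepsilon\in(0,1]$, $\overline h^\varepsilon(x^n)=\inf\{a\in\mathbb R:\sum_{y^n:\log(1/P_{X^n|Y^n}(x^n|y^n))>a}P_{Y^n|X^n}(y^n|x^n)\le\varepsilon\}$ and $\overline H_s^\varepsilon(X^n|Y^n)=\sum_{x^n}P_{X^n}(x^n)\overline h^\varepsilon(x^n)$. *)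

(* Defs.v *)
From HB Require Import structures.
From mathcomp Require Import all_boot all_order all_algebra.
From mathcomp Require Import all_classical all_reals all_analysis.
Set Implicit Arguments. Unset Strict Implicit. Unset Printing Implicit Defensive.
Import Order.TTheory GRing.Theory Num.Theory.
Import numFieldNormedType.Exports.
Local Open Scope classical_set_scope.
Local Open Scope ring_scope.

Section Defs.
Variable R : realType.
Variables X Y : countType.

(* A general correlated source: for each n, a joint pmf on X^n * Y^n. *)
Definition source := forall n : nat, n.-tuple X * n.-tuple Y -> R.

Definition is_source (P : source) : Prop :=
  forall n, (forall w, 0 <= P n w) /\ \esum_(w in [set: n.-tuple X * n.-tuple Y]) (P n w)%:E = 1%E.

Definition log2 (x : R) : R := ln x / ln 2.

(* marginals (as extended reals; finite for a pmf) *)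
Definition PX (P : source) n (x : n.-tuple X) : R :=
  fine (\esum_(y in [set: n.-tuple Y]) (P n (x, y))%:E).
Definition PY (P : source) n (y : n.-tuple Y) : R :=
  fine (\esum_(x in [set: n.-tuple X]) (P n (x, y))%:E).

Definition positive_marginals (P : source) : Prop :=
  forall n, (forall x : n.-tuple X, 0 < PX P x) /\ (forall y : n.-tuple Y, 0 < PY P y).

Definition PXgY (P : source) n (x : n.-tuple X) (y : n.-tuple Y) : R := P n (x, y) / PY P y.
Definition PYgX (P : source) n (y : n.-tuple Y) (x : n.-tuple X) : R := P n (x, y) / PX P x.

Definition Zn (P : source) n (w : n.-tuple X * n.-tuple Y) : R :=
  n%:R^-1 * log2 (PXgY P w.1 w.2)^-1.

Definition PrZ (P : source) n (A : set R) : \bar R :=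
  \esum_(w in [set w | A (Zn P w)]) (P n w)%:E.

Definition tailZ (P : source) n (u : R) : \bar R :=
  \esum_(w in [set w | u <= `|Zn P w|]) (P n w * `|Zn P w|)%:E.

Definition uniformly_integrable (P : source) : Prop :=
  (ereal_sup [set tailZ P n u | n in [set: nat]]) @[u --> +oo] --> 0%E.

Definition Hup (P : source) : \bar R :=
  ereal_inf [set a%:E | a in [set a : R | (PrZ P n [set z | a < z]) @[n --> \oo] --> 0%E]].
Definition Hlow (P : source) : \bar R :=
  ereal_sup [set b%:E | b in [set b : R | (PrZ P n [set z | z < b]) @[n --> \oo] --> 0%E]].

Definition condH (P : source) n : \bar R :=
  \esum_(w in [set: n.-tuple X * n.-tuple Y]) (P n w * log2 (PXgY P w.1 w.2)^-1)%:E.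

Definition hbar (P : source) (eps : R) n (x : n.-tuple X) : \bar R :=
  ereal_inf [set a%:E | a in [set a : R |
    (\esum_(y in [set y : n.-tuple Y | (a < log2 (PXgY P x y)^-1)%R]) (PYgX P y x)%:E
      <= eps%:E)%E]].

Definition Hs (P : source) (eps : R) n : \bar R :=
  \esum_(x in [set: n.-tuple X]) ((PX P x)%:E * hbar P eps x)%E.

End Defs.

(* Main.v *)
Require Import Defs.
From HB Require Import structures.
From mathcomp Require Import all_boot all_order all_algebra.
From mathcomp Require Import all_classical all_reals all_analysis.
From mathcomp Require Import ring lra.
Import Order.TTheory GRing.Theory Num.Theory.
Import numFieldNormedType.Exports.
Local Open Scope classical_set_scope.
Local Open Scope ring_scope.
Section Gen.
Variables (R : realType) (T : choiceType).
Local Open Scope ereal_scope.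

Lemma esumZ (c : R) (A : set T) (f : T -> \bar R) : (0 <= c)%R ->
  (forall x, 0 <= f x) ->
  \esum_(i in A) (c%:E * f i) = c%:E * \esum_(i in A) f i.
Proof.
move=> c0 f0; have [->|cn0] := eqVneq c 0%R.
  by rewrite mul0e esum1// => i _; rewrite mul0e.
have cp : (0 < c)%R by rewrite lt_def cn0.
rewrite /esum -ereal_sup_pZl//; congr ereal_sup.
apply/seteqP; split => y /=.
  by move=> [F FA <-]; exists (\sum_(i \in F) f i); [exists F|rewrite ge0_mule_fsumr].
by move=> [z [F FA <-] <-]; exists F => //; rewrite ge0_mule_fsumr.
Qed.

Lemma esum_subset (A B : set T) (f : T -> \bar R) : A `<=` B ->
  (forall x, 0 <= f x) -> \esum_(i in A) f i <= \esum_(i in B) f i.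
Proof.
move=> AB f0; rewrite (esumID A B) //; rewrite setIidr //.
by rewrite leeDl // esum_ge0.
Qed.

Lemma esum_ind (A : set T) (f : T -> \bar R) :
  \esum_(i in A) f i = \esum_(i in [set: T]) (if i \in A then f i else 0).
Proof. exact: esum_mkcond. Qed.

End Gen.
Section Gen2.
Variables (R : realType) (T : choiceType).
Variables (p : T -> R) (Z : T -> R).
Hypothesis p0 : forall w, (0 <= p w)%R.
Hypothesis p1 : \esum_(w in [set: T]) (p w)%:E = 1%E.
Hypothesis Z0 : forall w, (0 <= Z w)%R.
Local Open Scope ereal_scope.

Lemma ind_ge0 (A : set T) (f : T -> \bar R) w : (forall w, 0 <= f w) ->
  0 <= (if w \in A then f w else 0).
Proof. by move=> f0; case: ifP. Qed.

Lemma upper_gen (c u : R) : (0 <= c)%R -> (0 <= u)%R ->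
  \esum_(w in [set: T]) (p w * Z w)%:E <=
  c%:E + u%:E * (\esum_(w in [set w | (c < Z w)%R]) (p w)%:E) +
  \esum_(w in [set w | (u <= `|Z w|)%R]) (p w * `|Z w|)%:E.
Proof.
move=> c0 u0.
have pE : forall w, 0 <= (p w)%:E by move=> w; rewrite lee_fin.
rewrite -[c%:E]mule1 -p1 -!esumZ//.
rewrite [X in _ <= _ + X + _]esum_ind [X in _ <= _ + X]esum_ind.
rewrite -esumD; last 2 first.
- by move=> w _; rewrite mule_ge0 ?lee_fin.
- by move=> w _; case: ifP => // _; rewrite mule_ge0 ?lee_fin.
rewrite -esumD; last 2 first.
- move=> w _; rewrite adde_ge0 ?mule_ge0 ?lee_fin//.
  by case: ifP => // _; rewrite mule_ge0 ?lee_fin.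
- by move=> w _; case: ifP => // _; rewrite lee_fin mulr_ge0.
apply: le_esum => w _.
have pw := p0 w; have Zw := Z0 w.
have [uZ|uZ] := lerP u `|Z w|.
  rewrite [X in _ <= _ + X]ifT; last exact: mem_set.
  rewrite -[X in X <= _]add0e leeD // ?adde_ge0 ?mule_ge0 ?lee_fin //.
    by case: ifP => // _; rewrite mule_ge0 ?lee_fin.
  by rewrite ger0_norm.
rewrite [X in _ <= _ + X]ifF; last by apply/negP => /set_mem /=; rewrite leNgt uZ.
rewrite adde0; rewrite ger0_norm // in uZ.
have [cZ|cZ] := ltrP c (Z w).
  rewrite [X in _ <= _ + X]ifT; last exact: mem_set.
  rewrite -[X in X <= _]add0e leeD // ?mule_ge0 ?lee_fin //.
  by rewrite mulrC; apply: ler_wpM2r => //; exact: ltW.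
rewrite ifF; last by apply/negP => /set_mem /=; rewrite ltNge cZ.
by rewrite adde0 -EFinM lee_fin mulrC; apply: ler_wpM2r.
Qed.


End Gen2.
Section Gen3.
Variables (R : realType) (T : choiceType).
Variables (p : T -> R) (Z : T -> R).
Hypothesis p0 : forall w, (0 <= p w)%R.
Hypothesis p1 : \esum_(w in [set: T]) (p w)%:E = 1%E.
Hypothesis Z0 : forall w, (0 <= Z w)%R.
Local Open Scope ereal_scope.

Lemma lower_tail (u b b' : R) : (0 <= b)%R -> (u <= b)%R -> (b <= b')%R ->
  b%:E <= \esum_(w in [set w | (u <= `|Z w|)%R]) (p w * `|Z w|)%:E +
          b%:E * (\esum_(w in [set w | (Z w < b')%R]) (p w)%:E).
Proof.
move=> b0 ub bb.
have pE : forall w, 0 <= (p w)%:E by move=> w; rewrite lee_fin.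
rewrite -[b%:E in X in X <= _]mule1 -p1 -!esumZ//.
rewrite [X in _ <= X + _]esum_ind [X in _ <= _ + X]esum_ind.
rewrite -esumD; last 2 first.
- by move=> w _; case: ifP => // _; rewrite lee_fin mulr_ge0.
- by move=> w _; case: ifP => // _; rewrite mule_ge0 ?lee_fin.
apply: le_esum => w _.
have pw := p0 w; have Zw := Z0 w.
have [Zb|Zb] := ltrP (Z w) b'.
  rewrite [X in _ <= _ + X]ifT; last exact: mem_set.
  by rewrite -[X in X <= _]add0e leeD //; case: ifP => // _; rewrite lee_fin mulr_ge0.
rewrite [X in _ <= _ + X]ifF; last by apply/negP => /set_mem /=; rewrite ltNge Zb.
rewrite ifT; last by apply: mem_set; rewrite /= ger0_norm // (le_trans ub) // (le_trans bb).
rewrite adde0 -EFinM lee_fin ger0_norm //.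
rewrite mulrC; exact: (ler_wpM2l pw (le_trans bb Zb)).
Qed.

Lemma lower_gen (c : R) : (0 <= c)%R ->
  c%:E <= \esum_(w in [set: T]) (p w * Z w)%:E +
          c%:E * (\esum_(w in [set w | (Z w < c)%R]) (p w)%:E).
Proof.
move=> c0.
have pE : forall w, 0 <= (p w)%:E by move=> w; rewrite lee_fin.
rewrite -[c%:E in X in X <= _]mule1 -p1 -!esumZ//.
rewrite [X in _ <= _ + X]esum_ind.
rewrite -esumD; last 2 first.
- by move=> w _; rewrite lee_fin mulr_ge0.
- by move=> w _; case: ifP => // _; rewrite mule_ge0 ?lee_fin.
apply: le_esum => w _.
have pw := p0 w; have Zw := Z0 w.
have [Zb|Zb] := ltrP (Z w) c.
  rewrite ifT; last exact: mem_set.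
  by rewrite -[X in X <= _]add0e leeD // lee_fin mulr_ge0.
rewrite ifF; last by apply/negP => /set_mem /=; rewrite ltNge Zb.
by rewrite adde0 -EFinM lee_fin mulrC; apply: ler_wpM2l.
Qed.

End Gen3.
Lemma fine_posE (R : realType) (e : \bar R) : (0 < fine e)%R -> e = (fine e)%:E.
Proof. by case: e => //= ; rewrite ltxx. Qed.

Section Src.
Variables (R : realType) (X Y : countType) (P : source R X Y).
Hypothesis Psrc : is_source P.
Hypothesis Ppos : positive_marginals P.
Local Open Scope ereal_scope.

Lemma P_ge0 {n} w : (0 <= P n w)%R.
Proof. by case: (Psrc n) => + _; apply. Qed.

Lemma P_sum1 {n} : \esum_(w in [set: n.-tuple X * n.-tuple Y]) (P n w)%:E = 1.
Proof. by case: (Psrc n). Qed.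

Lemma fubini {n} (f : n.-tuple X * n.-tuple Y -> \bar R) : (forall w, 0 <= f w) ->
  \esum_(w in [set: n.-tuple X * n.-tuple Y]) f w =
  \esum_(x in [set: n.-tuple X]) \esum_(y in [set: n.-tuple Y]) f (x, y).
Proof.
move=> f0; rewrite (@esum_esum _ _ _ setT (fun _ => setT) (fun i j => f (i, j))) //.
rewrite (_ : [set: n.-tuple X] `*`` (fun _ => [set: n.-tuple Y]) = setT);
  last by apply/seteqP; split.
by apply: eq_esum => -[].
Qed.

Lemma PY_E {n} (y : n.-tuple Y) :
  (PY P y)%:E = \esum_(x in [set: n.-tuple X]) (P n (x, y))%:E.
Proof. by rewrite /PY -fine_posE //; case: (Ppos n) => _; apply. Qed.

Lemma PX_E {n} (x : n.-tuple X) :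
  (PX P x)%:E = \esum_(y in [set: n.-tuple Y]) (P n (x, y))%:E.
Proof. by rewrite /PX -fine_posE //; case: (Ppos n) => + _; apply. Qed.

Lemma PY_gt0 {n} (y : n.-tuple Y) : (0 < PY P y)%R.
Proof. by case: (Ppos n) => _; apply. Qed.

Lemma PX_gt0 {n} (x : n.-tuple X) : (0 < PX P x)%R.
Proof. by case: (Ppos n) => + _; apply. Qed.

Lemma P_le_PY {n} x y : (P n (x, y) <= PY P y)%R.
Proof.
rewrite -lee_fin PY_E -(@esum_set1 R _ x (fun x => (P n (x, y))%:E)) ?lee_fin ?P_ge0 //.
by apply: esum_subset => // ? ; rewrite lee_fin P_ge0.
Qed.

Lemma P_le_PX {n} x y : (P n (x, y) <= PX P x)%R.
Proof.
rewrite -lee_fin PX_E -(@esum_set1 R _ y (fun y => (P n (x, y))%:E)) ?lee_fin ?P_ge0 //.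
by apply: esum_subset => // ? ; rewrite lee_fin P_ge0.
Qed.

Lemma PXgY_ge0 {n} (x : n.-tuple X) y : (0 <= PXgY P x y)%R.
Proof. by rewrite /PXgY divr_ge0 ?P_ge0 // ltW // PY_gt0. Qed.

Lemma PXgY_le1 {n} (x : n.-tuple X) y : (PXgY P x y <= 1)%R.
Proof. by rewrite /PXgY ler_pdivrMr ?PY_gt0 // mul1r P_le_PY. Qed.

Lemma log2inv_ge0 (r : R) : (0 <= r)%R -> (r <= 1)%R -> (0 <= log2 r^-1)%R.
Proof.
move=> r0 r1; rewrite /log2 divr_ge0 //; last by rewrite ltW // ln_gt0 // ltr1n.
have [->|rn0] := eqVneq r 0%R; first by rewrite invr0 ln0.
by rewrite ln_ge0 // invr_ge1 ?unitfE // lt_def rn0.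
Qed.

Lemma L_ge0 {n} (x : n.-tuple X) y : (0 <= log2 (PXgY P x y)^-1)%R.
Proof. by apply: log2inv_ge0; [exact: PXgY_ge0|exact: PXgY_le1]. Qed.

Lemma Zn_ge0 {n} (w : n.-tuple X * n.-tuple Y) : (0 <= Zn P w)%R.
Proof. by rewrite /Zn mulr_ge0 // L_ge0. Qed.

Lemma PYgX_sum1 {n} (x : n.-tuple X) :
  \esum_(y in [set: n.-tuple Y]) (PYgX P y x)%:E = 1.
Proof.
rewrite /PYgX (eq_esum (b := fun y => (PX P x)^-1%:E * (P n (x, y))%:E));
  last by move=> y _; rewrite -EFinM mulrC.
rewrite esumZ; last by move=> y; rewrite lee_fin P_ge0.
  by rewrite -PX_E -EFinM mulVf // gt_eqF // PX_gt0.
by rewrite invr_ge0 ltW // PX_gt0.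
Qed.

Variable eps : R.
Hypothesis eps0 : (0 < eps)%R.
Hypothesis eps1 : (eps < 1)%R.

Let Lf {n} (x : n.-tuple X) y := log2 (PXgY P x y)^-1.

Lemma PYgX_ge0 {n} (x : n.-tuple X) y : (0 <= PYgX P y x)%R.
Proof. by rewrite /PYgX divr_ge0 ?P_ge0 // ltW // PX_gt0. Qed.

Lemma Sa_le1 {n} (x : n.-tuple X) (a : R) :
  \esum_(y in [set y : n.-tuple Y | (a < Lf x y)%R]) (PYgX P y x)%:E <= 1.
Proof.
rewrite -(PYgX_sum1 x); apply: esum_subset => // y.
by rewrite lee_fin PYgX_ge0.
Qed.

Lemma hbar_ge0 {n} (x : n.-tuple X) : 0 <= hbar P eps x.
Proof.
apply: le_ereal_inf_tmp => _ [a /= Ha <-]; rewrite lee_fin leNgt; apply/negP => a0.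
move: Ha; rewrite (_ : [set y | _] = setT); last first.
  apply/seteqP; split => // y _ /=; apply: (lt_le_trans a0); exact: L_ge0.
by rewrite (PYgX_sum1 x) lee_fin leNgt eps1.
Qed.

Lemma hbar_small {n} (x : n.-tuple X) (a : R) :
  \esum_(y in [set y : n.-tuple Y | (a < Lf x y)%R]) (PYgX P y x)%:E <= eps%:E ->
  hbar P eps x <= a%:E.
Proof. by move=> H; apply: ereal_inf_lbound; exists a. Qed.

Lemma hbar_lt {n} (x : n.-tuple X) (a : R) : hbar P eps x < a%:E ->
  \esum_(y in [set y : n.-tuple Y | (a < Lf x y)%R]) (PYgX P y x)%:E <= eps%:E.
Proof.
move=> /ereal_inf_lt [_ [a' /= Ha' <-]]; rewrite lte_fin => a'a.
apply: le_trans Ha'; apply: esum_subset; last by move=> y; rewrite lee_fin PYgX_ge0.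
by move=> y /= ay; apply: lt_trans ay.
Qed.

Lemma hbar_le {n} (x : n.-tuple X) :
  eps%:E * hbar P eps x <=
  \esum_(y in [set: n.-tuple Y]) (PYgX P y x * Lf x y)%:E.
Proof.
set M := esum _ _.
have M0 : 0 <= M by apply: esum_ge0 => y _; rewrite lee_fin mulr_ge0 ?PYgX_ge0 ?L_ge0.
move: M0; case Em : M => [m||] M0 //; last by rewrite leey.
move: M0; rewrite lee_fin => m0; apply/lee_addgt0Pr => d d0.
set a := ((m + d) / eps)%R.
have a0 : (0 < a)%R by rewrite /a divr_gt0 // ltr_wpDl.
have Ha : hbar P eps x <= a%:E.
  apply: hbar_small.
  set S := esum _ _.
  have S0 : 0 <= S by apply: esum_ge0 => y _; rewrite lee_fin PYgX_ge0.
  have S1 : S <= 1 by apply: Sa_le1.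
  have aS : a%:E * S <= m%:E.
    rewrite /S -esumZ; last 2 first.
    - exact: ltW.
    - by move=> y; rewrite lee_fin PYgX_ge0.
    rewrite -Em; apply: (@le_trans _ _ (\esum_(y in [set y | (a < Lf x y)%R]) (PYgX P y x * Lf x y)%:E)); last first.
      apply: esum_subset => // y; by rewrite lee_fin mulr_ge0 ?PYgX_ge0 ?L_ge0.
    apply: le_esum => y /= ay; rewrite -EFinM lee_fin mulrC.
    by apply: ler_wpM2l; [exact: PYgX_ge0|exact: ltW].
  move: S0 S1 aS; case: S => [s||] //; rewrite !lee_fin => s0 s1 aS.
  have : (a * s < a * eps)%R.
    by apply: le_lt_trans aS _; rewrite /a divfK ?gt_eqF // ltrDl.
  by rewrite ltr_pM2l // => /ltW.
rewrite -EFinD.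
have -> : (m + d)%R = (eps * a)%R by rewrite /a mulrC divfK // gt_eqF.
by rewrite EFinM; apply: lee_wpmul2l => //; rewrite lee_fin ltW.
Qed.


Lemma esum_PX1 {n} : \esum_(x in [set: n.-tuple X]) (PX P x)%:E = 1.
Proof.
rewrite -(P_sum1 (n:=n)) fubini; last by move=> w; rewrite lee_fin P_ge0.
by apply: eq_esum => x _; rewrite PX_E.
Qed.

Lemma esumP_PYgX {n} (x : n.-tuple X) (B : set (n.-tuple Y)) :
  \esum_(y in B) (P n (x, y))%:E = (PX P x)%:E * \esum_(y in B) (PYgX P y x)%:E.
Proof.
rewrite -esumZ; last 2 first.
- exact/ltW/PX_gt0.
- by move=> y; rewrite lee_fin PYgX_ge0.
apply: eq_esum => y _; rewrite -EFinM /PYgX mulrC divfK //.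
by rewrite gt_eqF // PX_gt0.
Qed.

Lemma PrZ_fub {n} (A : set R) : PrZ P n A =
  \esum_(x in [set: n.-tuple X]) \esum_(y in [set: n.-tuple Y])
     (if (x, y) \in [set w | A (Zn P w)] then (P n (x, y))%:E else 0).
Proof.
rewrite /PrZ esum_ind fubini //.
by move=> w; case: ifP => // _; rewrite lee_fin P_ge0.
Qed.

Lemma Hs_ge0_pt {n} (x : n.-tuple X) : 0 <= (PX P x)%:E * hbar P eps x.
Proof. by rewrite mule_ge0 ?hbar_ge0 // lee_fin ltW // PX_gt0. Qed.

Lemma nHsE n : (n%:R^-1)%:E * Hs P eps n =
  \esum_(x in [set: n.-tuple X]) ((n%:R^-1)%:E * ((PX P x)%:E * hbar P eps x)).
Proof. by rewrite /Hs esumZ // => x; exact: Hs_ge0_pt. Qed.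

Lemma lower_pt {n} (x : n.-tuple X) (c c' : R) : (0 < n)%N -> (0 <= c)%R -> (c < c')%R ->
  (c * PX P x)%:E <= (n%:R^-1)%:E * ((PX P x)%:E * hbar P eps x) +
    (c / (1 - eps))%:E * \esum_(y in [set: n.-tuple Y])
       (if (x, y) \in [set w | [set z | (z < c')%R] (Zn P w)] then (P n (x, y))%:E else 0).
Proof.
move=> n0 c0 cc.
have PX0 := PX_gt0 x.
have n0' : (0 < n%:R :> R)%R by rewrite ltr0n.
have e1 : (0 < 1 - eps)%R by rewrite subr_gt0.
have [hb|hb] := leP ((n%:R * c)%:E) (hbar P eps x).
  rewrite -[X in X <= _]adde0 leeD //; last first.
    apply: mule_ge0; first by rewrite lee_fin divr_ge0 // ltW.
    by apply: esum_ge0 => y _; case: ifP => // _; rewrite lee_fin P_ge0.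
  apply: (@le_trans _ _ ((n%:R^-1)%:E * ((PX P x)%:E * (n%:R * c)%:E))).
    rewrite -!EFinM lee_fin le_eqVlt; apply/orP; left; apply/eqP.
    by field; rewrite gt_eqF.
  apply: lee_wpmul2l; first by rewrite lee_fin invr_ge0 ltW.
  by apply: lee_wpmul2l => //; rewrite lee_fin ltW.
have := hbar_lt _ _ hb; set S1 := esum _ _ => S1e.
set B := [set y | ~ (n%:R * c < log2 (PXgY P x y)^-1)%R].
have Hsum : 1 = S1 + \esum_(y in B) (PYgX P y x)%:E.
  rewrite -(PYgX_sum1 x) (esumID [set y | (n%:R * c < log2 (PXgY P x y)^-1)%R]); last first.
    by move=> y _; rewrite lee_fin PYgX_ge0.
  by rewrite !setTI.
have HB : (1 - eps)%:E <= \esum_(y in B) (PYgX P y x)%:E.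
  move: Hsum S1e; have : \esum_(y in B) (PYgX P y x)%:E <= 1.
    rewrite -(PYgX_sum1 x); apply: esum_subset => // y; by rewrite lee_fin PYgX_ge0.
  have : 0 <= \esum_(y in B) (PYgX P y x)%:E by apply: esum_ge0 => y _; rewrite lee_fin PYgX_ge0.
  have : 0 <= S1 by apply: esum_ge0 => y _; rewrite lee_fin PYgX_ge0.
  case: (\esum_(y in B) (PYgX P y x)%:E) => [s||] //; case: S1 => [s1||] //.
  move=> ? ? ? /eqP; rewrite -EFinD eqe => /eqP h1; rewrite !lee_fin => h2.
  have h1' : (1 = s1 + s)%R by [].
  lra.
have HA : ((PX P x)%:E * (\esum_(y in B) (PYgX P y x)%:E) <=
    \esum_(y in [set: n.-tuple Y])
       (if (x, y) \in [set w | [set z | (z < c')%R] (Zn P w)] then (P n (x, y))%:E else 0))%E.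
  rewrite -esumP_PYgX esum_ind; apply: le_esum => y _.
  case: ifPn => [/set_mem Ly'|_]; last by case: ifP => // _; rewrite lee_fin P_ge0.
  have Ly : (log2 (PXgY P x y)^-1 <= n%:R * c)%R by rewrite leNgt; apply/negP.
  rewrite ifT //; apply: mem_set; rewrite /Zn /=.
  by apply: le_lt_trans cc; rewrite ler_pdivrMl.
rewrite -[X in X <= _]add0e leeD //; first by apply: mule_ge0; [rewrite lee_fin invr_ge0 ltW|exact: Hs_ge0_pt].
apply: le_trans (lee_wpmul2l _ HA); last by rewrite lee_fin divr_ge0 // ltW.
apply: (@le_trans _ _ ((c / (1 - eps))%:E * ((PX P x)%:E * (1 - eps)%:E))).
  rewrite -!EFinM lee_fin le_eqVlt; apply/orP; left; apply/eqP.
  by field; rewrite gt_eqF.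
apply: lee_wpmul2l; first by rewrite lee_fin divr_ge0 // ltW.
by apply: lee_wpmul2l => //; rewrite lee_fin ltW.
Qed.


Lemma Hs_lower n (c c' : R) : (0 < n)%N -> (0 <= c)%R -> (c < c')%R ->
  c%:E <= (n%:R^-1)%:E * Hs P eps n +
          (c / (1 - eps))%:E * PrZ P n [set z | (z < c')%R].
Proof.
move=> n0 c0 cc.
have e1 : (0 < 1 - eps)%R by rewrite subr_gt0.
rewrite nHsE PrZ_fub -esumZ; last 2 first.
- by rewrite divr_ge0 // ltW.
- by move=> x; apply: esum_ge0 => y _; case: ifP => // _; rewrite lee_fin P_ge0.
rewrite -esumD; last 2 first.
- move=> x _; apply: mule_ge0; [by rewrite lee_fin invr_ge0|exact: Hs_ge0_pt].
- move=> x _; apply: mule_ge0; first by rewrite lee_fin divr_ge0 // ltW.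
  by apply: esum_ge0 => y _; case: ifP => // _; rewrite lee_fin P_ge0.
rewrite -[c%:E]mule1 -(esum_PX1 (n:=n)) -esumZ //; last by move=> x; rewrite lee_fin ltW // PX_gt0.
apply: le_esum => x _; rewrite -EFinM; exact: lower_pt.
Qed.

Definition bad {n} (x : n.-tuple X) (c : R) : bool :=
  (eps%:E < \esum_(y in [set y | (n%:R * c < log2 (PXgY P x y)^-1)%R]) (PYgX P y x)%:E).

Lemma upper_pt n (x : n.-tuple X) (c : R) : (0 < n)%N -> (0 <= c)%R ->
  (n%:R^-1)%:E * ((PX P x)%:E * hbar P eps x) <= (c * PX P x)%:E +
   (eps^-1)%:E * (if bad x c then \esum_(y in [set: n.-tuple Y]) (P n (x, y) * Zn P (x, y))%:E else 0).
Proof.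
move=> n0 c0.
have PX0 := PX_gt0 x.
have n0' : (0 < n%:R :> R)%R by rewrite ltr0n.
case: (boolP (bad x c)) => hb; last first.
  rewrite mule0 adde0; have : hbar P eps x <= (n%:R * c)%:E.
    by apply: hbar_small; rewrite leNgt.
  move=> H; apply: (@le_trans _ _ ((n%:R^-1)%:E * ((PX P x)%:E * (n%:R * c)%:E))).
    apply: lee_wpmul2l; first by rewrite lee_fin invr_ge0 ltW.
    by apply: lee_wpmul2l => //; rewrite lee_fin ltW.
  rewrite -!EFinM lee_fin le_eqVlt; apply/orP; left; apply/eqP.
  by field; rewrite (gt_eqF n0').
rewrite -[X in X <= _]add0e leeD //; first by rewrite lee_fin mulr_ge0 // ltW.
have H := hbar_le x.
have -> : ((n%:R^-1)%:E * ((PX P x)%:E * hbar P eps x) =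
    (eps^-1)%:E * ((n%:R^-1 * PX P x)%:E * (eps%:E * hbar P eps x)))%E.
  rewrite !muleA -!EFinM; congr (_ * _)%E; congr (_%:E).
  by rewrite [RHS]mulrAC mulVf ?mul1r // (gt_eqF eps0).
apply: lee_wpmul2l; first by rewrite lee_fin invr_ge0 ltW.
apply: le_trans (lee_wpmul2l _ H) _; first by rewrite lee_fin mulr_ge0 ?invr_ge0 // ltW.
rewrite -esumZ; last 2 first.
- by rewrite mulr_ge0 ?invr_ge0 // ltW.
- by move=> y; rewrite lee_fin mulr_ge0 ?PYgX_ge0 ?L_ge0.
rewrite le_eqVlt; apply/orP; left; apply/eqP; apply: eq_esum => y _.
rewrite -EFinM /Zn /PYgX /Lf /=; congr (_%:E).
by set L := log2 _; field; rewrite (gt_eqF n0') (gt_eqF PX0).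
Qed.

Lemma bad_pt n (x : n.-tuple X) (c : R) : (0 < n)%N ->
  (if bad x c then (eps * PX P x)%:E else 0) <=
  \esum_(y in [set: n.-tuple Y])
     (if (x, y) \in [set w | [set z | (c < z)%R] (Zn P w)] then (P n (x, y))%:E else 0).
Proof.
move=> n0; have n0' : (0 < n%:R :> R)%R by rewrite ltr0n.
have PX0 := PX_gt0 x.
case: ifPn => hb; last by apply: esum_ge0 => y _; case: ifP => // _; rewrite lee_fin P_ge0.
apply: (@le_trans _ _ (\esum_(y in [set y | (n%:R * c < log2 (PXgY P x y)^-1)%R]) (P n (x, y))%:E)).
  rewrite esumP_PYgX EFinM muleC; apply: lee_wpmul2l; first by rewrite lee_fin ltW.
  exact: ltW.
rewrite esum_ind; apply: le_esum => y _.
case: ifPn => [/set_mem Ly|_]; last by case: ifP => // _; rewrite lee_fin P_ge0.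
rewrite ifT //; apply: mem_set; rewrite /Zn /=.
by rewrite ltr_pdivlMl.
Qed.


Lemma esum_if_fub n (b : n.-tuple X -> bool) (f : n.-tuple X * n.-tuple Y -> \bar R) :
  (forall w, 0 <= f w) ->
  \esum_(w in [set: n.-tuple X * n.-tuple Y]) (if b w.1 then f w else 0) =
  \esum_(x in [set: n.-tuple X]) (if b x then \esum_(y in [set: n.-tuple Y]) f (x, y) else 0).
Proof.
move=> f0; rewrite fubini; last by move=> w; case: ifP.
apply: eq_esum => x _ /=; case: (b x) => //.
by rewrite esum1.
Qed.

Lemma nCondHE n : (n%:R^-1)%:E * condH P n =
  \esum_(w in [set: n.-tuple X * n.-tuple Y]) (P n w * Zn P w)%:E.
Proof.
rewrite /condH -esumZ; last 2 first.
- by rewrite invr_ge0.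
- by move=> w; rewrite lee_fin mulr_ge0 ?P_ge0 ?L_ge0.
by apply: eq_esum => w _; rewrite -EFinM /Zn mulrCA.
Qed.

Lemma Hs_upper n (c u : R) : (0 < n)%N -> (0 <= c)%R -> (0 <= u)%R ->
  (n%:R^-1)%:E * Hs P eps n <= c%:E + (eps^-1)%:E *
    (u%:E * ((eps^-1)%:E * PrZ P n [set z | (c < z)%R]) + tailZ P n u).
Proof.
move=> n0 c0 u0.
have ei0 : (0 <= eps^-1)%R by rewrite invr_ge0 ltW.
have PZ0 : forall w : n.-tuple X * n.-tuple Y, 0 <= (P n w * Zn P w)%:E.
  by move=> w; rewrite lee_fin mulr_ge0 ?P_ge0 ?Zn_ge0.
have G0 : forall x : n.-tuple X,
    0 <= (if bad x c then \esum_(y in [set: n.-tuple Y]) (P n (x, y) * Zn P (x, y))%:E else 0).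
  by move=> x; case: ifP => // _; apply: esum_ge0.
rewrite nHsE.
apply: le_trans (le_esum (fun x _ => upper_pt n x c n0 c0)) _.
rewrite esumD; last 2 first.
- by move=> x _; rewrite lee_fin mulr_ge0 // ltW // PX_gt0.
- by move=> x _; rewrite mule_ge0 // lee_fin.
rewrite esumZ // (eq_esum (b := fun x => (c%:E * (PX P x)%:E)%E)); last by move=> x _; rewrite EFinM.
rewrite esumZ //; last by move=> x; rewrite lee_fin ltW // PX_gt0.
rewrite esum_PX1 mule1 leeD2l //.
apply: lee_wpmul2l; first by rewrite lee_fin.
rewrite -(esum_if_fub n (fun x => bad x c) (fun w => (P n w * Zn P w)%:E)) //.
have step4 : \esum_(w in [set: n.-tuple X * n.-tuple Y]) (if bad w.1 c then (P n w)%:E else 0)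
    <= (eps^-1)%:E * PrZ P n [set z | (c < z)%R].
  rewrite (esum_if_fub n (fun x => bad x c) (fun w => (P n w)%:E)); last by move=> w; rewrite lee_fin P_ge0.
  rewrite lee_pdivlMl // PrZ_fub -esumZ; last 2 first.
  - exact: ltW.
  - by move=> x; case: ifP => // _; apply: esum_ge0 => y _; rewrite lee_fin P_ge0.
  apply: le_esum => x _; apply: le_trans (bad_pt n x c n0).
  by case: ifP => _; rewrite ?mule0 // EFinM PX_E.
apply: le_trans (leeD2r _ (lee_wpmul2l _ step4)); last by rewrite lee_fin.
rewrite /tailZ -esumZ; last 2 first.
- by [].
- by move=> w; case: ifP => // _; rewrite lee_fin P_ge0.
rewrite [X in _ <= _ + X]esum_ind -esumD; last 2 first.
- by move=> w _; case: ifP => // _; rewrite mule_ge0 ?lee_fin ?P_ge0.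
- by move=> w _; case: ifP => // _; rewrite lee_fin mulr_ge0 ?P_ge0.
apply: le_esum => w _.
case: ifPn => _; last by rewrite mule0 add0e; case: ifP => // _; rewrite lee_fin mulr_ge0 ?P_ge0.
have pw := P_ge0 w; have Zw := Zn_ge0 w.
have [uZ|uZ] := lerP u `|Zn P w|.
  rewrite ifT; last exact: mem_set.
  rewrite -[X in X <= _]add0e leeD // ?mule_ge0 ?lee_fin //.
  by rewrite ger0_norm.
rewrite ifF; last by apply/negP => /set_mem /=; rewrite leNgt uZ.
rewrite adde0 -EFinM lee_fin mulrC; apply: ler_wpM2r => //.
by rewrite ger0_norm // in uZ; exact: ltW.
Qed.

End Src.

Section Lim.
Variable R : realType.
Local Open Scope ereal_scope.

Lemma ecvg0_ev {T : Type} {F : set_system T} {FF : Filter F} (f : T -> \bar R) :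
  f x @[x --> F] --> 0%E -> forall d : R, (0 < d)%R -> \forall t \near F, f t <= d%:E.
Proof.
move=> /fine_cvgP [Hfin Hc] d d0.
move/cvgrPdist_le : Hc => /(_ d d0) Hd.
move: Hfin Hd; apply: filterS2 => t ft /=; rewrite sub0r normrN => H.
by rewrite -(fineK ft) lee_fin (le_trans (ler_norm _)).
Qed.

Lemma ecvg_crit (f : nat -> \bar R) (a : R) :
  (forall e, (0 < e)%R -> \forall n \near \oo, (a - e)%:E <= f n /\ f n <= (a + e)%:E) ->
  f n @[n --> \oo] --> a%:E.
Proof.
move=> H; apply/fine_cvgP; split.
  move: (H 1%R ltr01); apply: filterS => n [h1 h2].
  by rewrite fin_numElt (lt_le_trans _ h1) ?ltNyr // (le_lt_trans h2) ?ltry.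
apply/cvgrPdist_le => e e0; move: (H e e0); apply: filterS => n [h1 h2].
have ft : f n \is a fin_num.
  by rewrite fin_numElt (lt_le_trans _ h1) ?ltNyr // (le_lt_trans h2) ?ltry.
move: h1 h2; rewrite -(fineK ft) !lee_fin /= => h1 h2.
by rewrite distrC ler_distl h1 h2.
Qed.

End Lim.

Lemma frac_le (R : realType) (c u g : R) : 0 <= c -> c <= u -> 0 <= g ->
  c * (g / (u + 1)) <= g.
Proof.
move=> c0 cu g0; have u1 : 0 < u + 1 by rewrite ltr_wpDl // (le_trans c0).
rewrite mulrA ler_pdivrMr //; nra.
Qed.

Section Main.
Variables (R : realType) (X Y : countType) (P : source R X Y).
Hypothesis Psrc : is_source P.
Hypothesis Ppos : positive_marginals P.
Hypothesis UI : uniformly_integrable P.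
Local Open Scope ereal_scope.

Let P0 n := @P_ge0 R X Y P Psrc n.
Let P1 n := @P_sum1 R X Y P Psrc n.
Let Z0 n := @Zn_ge0 R X Y P Psrc Ppos n.

Definition En n := \esum_(w in [set: n.-tuple X * n.-tuple Y]) (P n w * Zn P w)%:E.

Lemma E_upper n (c u : R) : (0 <= c)%R -> (0 <= u)%R ->
  En n <= c%:E + u%:E * PrZ P n [set z | (c < z)%R] + tailZ P n u.
Proof. exact: (@upper_gen R _ (P n) (fun w => Zn P w) (P0 n) (P1 n) (Z0 n)). Qed.

Lemma E_lower n (c : R) : (0 <= c)%R ->
  c%:E <= En n + c%:E * PrZ P n [set z | (z < c)%R].
Proof. exact: (@lower_gen R _ (P n) (fun w => Zn P w) (P0 n) (P1 n) (Z0 n)). Qed.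

Lemma tail_lower n (u b b' : R) : (0 <= b)%R -> (u <= b)%R -> (b <= b')%R ->
  b%:E <= tailZ P n u + b%:E * PrZ P n [set z | (z < b')%R].
Proof. exact: (@lower_tail R _ (P n) (fun w => Zn P w) (P0 n) (P1 n) (Z0 n)). Qed.

Lemma UI_ev (d : R) : (0 < d)%R ->
  exists u : R, (0 <= u)%R /\ forall n, tailZ P n u <= d%:E.
Proof.
move=> d0; have := ecvg0_ev _ _ UI _ d0; case=> M [_ HM].
exists (`|M| + 1)%R; split; first by rewrite addr_ge0.
move=> n; apply: le_trans (HM (`|M| + 1)%R _); last by apply: le_lt_trans (ler_norm M) _; rewrite ltrDl.
by apply: ereal_sup_ubound; exists n.
Qed.

Lemma PrZ_mono n (A B : set R) : A `<=` B -> PrZ P n A <= PrZ P n B.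
Proof.
move=> AB; apply: esum_subset; last by move=> w; rewrite lee_fin P0.
by move=> w /= /AB.
Qed.

Lemma Hlow_ge0 : 0 <= Hlow P.
Proof.
apply: ereal_sup_ubound; exists 0%R => //=.
apply: cvg_near_cst; apply: nearW => n.
rewrite /PrZ esum1 // => w /= Zw.
by have := Z0 _ w; rewrite leNgt Zw.
Qed.

Lemma Hlow_fin : Hlow P < +oo.
Proof.
rewrite ltNge leye_eq; apply/negP => /eqP Hinf.
have [u0 [u00 Hu]] := @UI_ev 1%R ltr01.
set b := (u0 + 4)%R.
have : b%:E < Hlow P by rewrite Hinf ltry.
move=> /ereal_sup_gt [_ [b' Hb' <-]]; rewrite lte_fin => bb'.
have h2 : (0 < 1 / 2 :> R)%R by rewrite divr_gt0.
have [n Hn] := filter_ex (ecvg0_ev _ _ Hb' _ h2).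
have b0 : (0 <= b)%R by rewrite /b addr_ge0.
have ub : (u0 <= b)%R by rewrite /b lerDl.
have H := tail_lower n u0 b b' b0 ub (ltW bb').
have : b%:E <= 1%:E + (b * (1 / 2))%:E.
  apply: le_trans H _; apply: leeD => //; rewrite EFinM.
  by apply: lee_wpmul2l => //; rewrite lee_fin.
rewrite -EFinD lee_fin => hb; move: hb; rewrite /b; lra.
Qed.

Lemma Pr_up (H : R) : Hup P = H%:E -> forall g d : R, (0 < g)%R -> (0 < d)%R ->
  \forall n \near \oo, PrZ P n [set z | (H + g < z)%R] <= d%:E.
Proof.
move=> HE g d g0 d0.
have : Hup P < (H + g)%:E by rewrite HE lte_fin ltrDl.
move=> /ereal_inf_lt [_ [a /= Ha <-]]; rewrite lte_fin => aH.
have Hev : \forall n \near \oo, PrZ P n [set z | (a < z)%R] <= d%:E := ecvg0_ev _ _ Ha _ d0.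
case: Hev => N _ HN; exists N => // n /HN Hn; apply: le_trans Hn.
by apply: PrZ_mono => z /=; apply: lt_trans.
Qed.

Lemma Pr_lo (H : R) : Hlow P = H%:E -> forall g d : R, (0 < g)%R -> (0 < d)%R ->
  \forall n \near \oo, PrZ P n [set z | (z < H - g)%R] <= d%:E.
Proof.
move=> HE g d g0 d0.
have : (H - g)%:E < Hlow P by rewrite HE lte_fin ltrBlDr ltrDl.
move=> /ereal_sup_gt [_ [a /= Ha <-]]; rewrite lte_fin => aH.
have Hev : \forall n \near \oo, PrZ P n [set z | (z < a)%R] <= d%:E := ecvg0_ev _ _ Ha _ d0.
case: Hev => N _ HN; exists N => // n /HN Hn; apply: le_trans Hn.
by apply: PrZ_mono => z /= zH; apply: lt_trans aH.
Qed.


Lemma ev_and {A B : set nat} : (\forall n \near \oo, A n) -> (\forall n \near \oo, B n) ->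
  exists N, forall n, (N <= n)%N -> A n /\ B n.
Proof.
case=> N1 _ H1; case=> N2 _ H2; exists (maxn N1 N2) => n Hn; split.
  by apply: H1; rewrite /= (leq_trans (leq_maxl _ _) Hn).
by apply: H2; rewrite /= (leq_trans (leq_maxr _ _) Hn).
Qed.

Lemma part1 (H : R) : (0 <= H)%R -> Hup P = H%:E -> Hlow P = H%:E ->
  ((n%:R^-1)%:E * condH P n)%E @[n --> \oo] --> H%:E.
Proof.
move=> H0 HupE HlowE; apply: ecvg_crit => e e0.
set g := (e / 3)%R.
have g0 : (0 < g)%R by rewrite /g divr_gt0.
have [u [u0 Hu]] := @UI_ev g g0.
have d1 : (0 < g / (u + 1))%R by rewrite divr_gt0 // ltr_wpDl.
have d2 : (0 < g / (H + 1))%R by rewrite divr_gt0 // ltr_wpDl.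
have [N HN] := ev_and (@Pr_up H HupE _ _ g0 d1) (@Pr_lo H HlowE _ _ g0 d2).
exists N => // n /= /HN [h1 h2].
rewrite nCondHE //; split.
  have [Hg|Hg] := ltrP (H - g) 0.
    apply: (@le_trans _ _ 0%E); first by rewrite lee_fin; rewrite /g in Hg; lra.
    by apply: esum_ge0 => w _; rewrite lee_fin mulr_ge0 ?P0 ?Z0.
  have := E_lower n (H - g) Hg.
  have hc : ((H - g)%:E * PrZ P n [set z | (z < H - g)%R] <= g%:E)%E.
    apply: le_trans (_ : ((H - g)%:E * (g / (H + 1))%:E <= g%:E)%E).
      by apply: lee_wpmul2l => //; rewrite lee_fin.
    rewrite -EFinM lee_fin; apply: frac_le => //; [lra|exact: ltW].
  move=> /le_trans /(_ (leeD2l _ hc)).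
  move=> hh; have hh' : ((H - g)%:E - g%:E <= En n)%E by rewrite leeBlDr.
  apply: le_trans hh'; rewrite -EFinB lee_fin /g; lra.
apply: le_trans (E_upper n (H + g) u (ltW (ltr_wpDl H0 g0)) u0) _.
apply: (@le_trans _ _ ((H + g)%:E + (u * (g / (u + 1)))%:E + g%:E)%E).
  apply: leeD => //; apply: leeD => //; rewrite EFinM.
  by apply: lee_wpmul2l => //; rewrite lee_fin.
rewrite -!EFinD lee_fin.
have := @frac_le R u u g u0 (lexx u) (ltW g0); rewrite /g; lra.
Qed.


Lemma part2 (H eps : R) : (0 <= H)%R -> Hup P = H%:E -> Hlow P = H%:E ->
  (0 < eps)%R -> (eps < 1)%R ->
  ((n%:R^-1)%:E * Hs P eps n)%E @[n --> \oo] --> H%:E.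
Proof.
move=> H0 HupE HlowE ep0 ep1; apply: ecvg_crit => e e0.
set g := (e / 3)%R.
have g0 : (0 < g)%R by rewrite /g divr_gt0.
have eg0 : (0 < eps * g)%R by rewrite mulr_gt0.
have [u [u0 Hu]] := @UI_ev (eps * g) eg0.
have d1 : (0 < eps * eps * g / (u + 1))%R by rewrite divr_gt0 ?mulr_gt0 // ltr_wpDl.
have e1 : (0 < 1 - eps)%R by rewrite subr_gt0.
have d2 : (0 < (1 - eps) * g / (H + 1))%R by rewrite divr_gt0 ?mulr_gt0 // ltr_wpDl.
have g20 : (0 < g / 2)%R by rewrite divr_gt0.
have [N HN] := ev_and (@Pr_up H HupE _ _ g0 d1) (@Pr_lo H HlowE _ _ g20 d2).
exists N.+1 => // n /= Hn.
have [h1 h2] := HN n (ltnW Hn).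
have n0 : (0 < n)%N by apply: leq_ltn_trans Hn.
split.
  have [Hg|Hg] := ltrP (H - g) 0.
    apply: (@le_trans _ _ 0%E); first by rewrite lee_fin; rewrite /g in Hg; lra.
    rewrite nHsE //; apply: esum_ge0 => x _; apply: mule_ge0.
      by rewrite lee_fin invr_ge0.
    exact: (@Hs_ge0_pt R X Y P Psrc Ppos eps ep1 _ x).
  have cc : (H - g < H - g / 2)%R by rewrite /g; lra.
  have := @Hs_lower R X Y P Psrc Ppos eps ep1 n (H - g) (H - g / 2) n0 Hg cc.
  have hc : ((((H - g) / (1 - eps))%:E * PrZ P n [set z | (z < H - g / 2)%R]) <= g%:E)%E.
    apply: le_trans (_ : (((H - g) / (1 - eps))%:E * ((1 - eps) * g / (H + 1))%:E <= g%:E)%E).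
      by apply: lee_wpmul2l => //; rewrite lee_fin divr_ge0 // ltW.
    rewrite -EFinM lee_fin.
    have -> : ((H - g) / (1 - eps) * ((1 - eps) * g / (H + 1)) = (H - g) * (g / (H + 1)))%R.
      have H1 : (0 < H + 1)%R by rewrite ltr_wpDl.
      by field; rewrite (gt_eqF H1) (gt_eqF e1).
    apply: frac_le => //; [lra|exact: ltW].
  move=> /le_trans /(_ (leeD2l _ hc)) hh.
  have hh' : ((H - g)%:E - g%:E <= (n%:R^-1)%:E * Hs P eps n)%E by rewrite leeBlDr.
  apply: le_trans hh'; rewrite -EFinB lee_fin /g; lra.
apply: le_trans (@Hs_upper R X Y P Psrc Ppos eps ep0 ep1 n (H + g) u n0 (ltW (ltr_wpDl H0 g0)) u0) _.
apply: (@le_trans _ _ ((H + g)%:E + (eps^-1)%:E * ((u%:E * ((eps^-1)%:E * (eps * eps * g / (u + 1))%:E)) + (eps * g)%:E))%E).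
  apply: leeD2l; apply: lee_wpmul2l; first by rewrite lee_fin invr_ge0 ltW.
  apply: leeD => //; apply: lee_wpmul2l; first by rewrite lee_fin.
  by apply: lee_wpmul2l => //; rewrite lee_fin invr_ge0 ltW.
rewrite -!EFinM -!EFinD lee_fin.
have -> : (eps^-1 * (u * (eps^-1 * (eps * eps * g / (u + 1))) + eps * g) =
           u * (g / (u + 1)) + g)%R.
  have u1 : (0 < u + 1)%R by rewrite ltr_wpDl.
  by field; rewrite (gt_eqF u1) (gt_eqF ep0).
have := @frac_le R u u g u0 (lexx u) (ltW g0); rewrite /g; lra.
Qed.

End Main.

Theorem theorem9 (R : realType) (X Y : countType) (P : source R X Y) :
  is_source P -> positive_marginals P ->
  uniformly_integrable P -> Hlow P = Hup P ->
  exists H : R,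
    ((n%:R^-1)%:E * condH P n)%E @[n --> \oo] --> H%:E /\
    (forall eps : R, 0 < eps < 1 ->
       ((n%:R^-1)%:E * Hs P eps n)%E @[n --> \oo] --> H%:E).
Proof.
move=> Psrc Ppos UI Heq.
have H0 := @Hlow_ge0 R X Y P Psrc Ppos.
have Hf := @Hlow_fin R X Y P Psrc Ppos UI.
have HlowE : Hlow P = (fine (Hlow P))%:E by rewrite fineK // ge0_fin_numE.
have HupE : Hup P = (fine (Hlow P))%:E by rewrite -Heq.
have H0' : (0 <= fine (Hlow P))%R by rewrite -lee_fin -HlowE.
exists (fine (Hlow P)); split.
  exact: (@part1 R X Y P Psrc Ppos UI _ H0' HupE HlowE).
move=> eps /andP[ep0 ep1].
exact: (@part2 R X Y P Psrc Ppos UI _ _ H0' HupE HlowE ep0 ep1).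
Qed.
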